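(* Let $n\ge4$ and let $D_{\mathbf a}=\sum_{i=1}^{n+1}a_iD_i$ be a framing of $\mathbb P^n$ (fan matrix $V=(\mathbf e_1\cdots\mathbf e_n\ -\mathbf 1)$) with $a_1\le\dots\le a_{n+1}$, $\gcd(a_1,\dots,a_{n+1})=1$, satisfying (a) $\operatorname{conv}(\nabla'\cap N)=\operatorname{conv}\big(\{\mathbf 0\}\cup\{[a_n/a_{n-i+1}]\mathbf e_i:1\le i\le n\}\big)$ where $\nabla'=\operatorname{conv}(\mathbf 0,\mathbf e_1,\tfrac{a_n}{a_{n-1}}\mathbf e_2,\dots,\tfrac{a_n}{a_1}\mathbf e_n)$, and (b) $d_i=d_j=1$ for some $i\ne j$, where $d_k=\gcd\{a_l:l\ne k\}$. Let $(\mathbb X_{\mathbf a},\mathbf b)$ be the $f$-dual, with fan matrix $\Lambda_{\mathbf a}$, $\Delta_{\mathbf b}=\{\mathbf n:\Lambda_{\mathbf a}^T\mathbf n\ge-\mathbf b\}$, $\Delta_{-K}=\{\mathbf n:\Lambda_{\mathbf a}^T\mathbf n\ge-\mathbf 1\}$ and $m_{Y^\vee}:=l(\Delta_{\mathbf b})-1-n-\sum_{\Theta\text{ facet of }\Delta_{-K}}l^*(\Theta)$. Then the following are equivalent: (1) $m_{Y^\vee}=1$; (2) $l(\Delta_{\mathbf b})=l(\nabla)=n+2$, where $\nabla=\operatorname{conv}(V)$; (3) $[\Delta_{\mathbf b}]=\nabla$; (4) $[a_n/a_1]=1$.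
   Context: $[x]$ for a real number is its integer part; for a polytope $P$, $[P]$ is the convex hull of its lattice points, $l(P)$ the number of its lattice points, $l^*(P)$ the number of lattice points in its relative interior. $D_1,\dots,D_{n+1}$ are the torus-invariant prime divisors of $\mathbb P^n$. The $f$-dual: $\Delta_{\mathbf a}=\{\mathbf m:V^T\mathbf m\ge-\mathbf a\}$ (a lattice polytope here), $\mathbb X_{\mathbf a}$ is the toric variety of the fan of cones over the faces of $\Delta_{\mathbf a}$, whose fan matrix $\Lambda_{\mathbf a}=(\boldsymbol\lambda_j)$ consists of the primitive generators of rays through the vertices of $\Delta_{\mathbf a}$, and $b_j=\max(\{1\}\cup\{-\langle\mathbf v_i,\boldsymbol\lambda_j\rangle\}_i)$, $\mathbf v_i$ the columns of $V$. *)

(* Defs.v *)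
From HB Require Import structures.
From mathcomp Require Import all_boot all_order all_algebra.
Set Implicit Arguments. Unset Strict Implicit. Unset Printing Implicit Defensive.
Import Order.TTheory GRing.Theory Num.Theory.
Local Open Scope ring_scope.

Definition dotv {R : pzRingType} {n : nat} (u v : 'rV[R]_n) : R :=
  \sum_(k < n) u ord0 k * v ord0 k.

Definition intv {n : nat} (y : 'rV[int]_n) : 'rV[rat]_n := map_mx (fun z : int => z%:~R) y.

(* columns v_1..v_{n+1} of the fan matrix V = (e_1 ... e_n  -1) of P^n;
   0-based: column i < n is e_i, column n is -1 *)
Definition Vcol {n : nat} (i : 'I_n.+1) : 'rV[int]_n :=
  \row_(k < n) (if (i : nat) == n then -1 else if (k : nat) == i then 1 else 0).

Definition ebas {n : nat} (i : 'I_n) : 'rV[rat]_n :=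
  \row_(k < n) (if k == i then 1 else 0).

Definition conv {n : nat} (S : 'rV[rat]_n -> Prop) (x : 'rV[rat]_n) : Prop :=
  exists (m : nat) (p : 'I_m -> 'rV[rat]_n) (w : 'I_m -> rat),
    (forall i, S (p i)) /\ (forall i, 0 <= w i) /\ \sum_i w i = 1 /\
    x = \sum_i w i *: p i.

Definition isLattice {n : nat} (x : 'rV[rat]_n) : Prop := exists y, x = intv y.

Definition card_is {T : eqType} (P : T -> Prop) (k : nat) : Prop :=
  exists s : seq T, uniq s /\ (forall x, x \in s <-> P x) /\ size s = k.

Definition primitive {n : nat} (l : 'rV[int]_n) : Prop :=
  \big[gcdn/0%N]_(k < n) `|l ord0 k|%N = 1%N.

Definition DeltaA {n : nat} (a : 'I_n.+1 -> nat) (x : 'rV[rat]_n) : Prop :=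
  forall i, dotv (intv (Vcol i)) x >= - (a i)%:R.

Definition isVertexA {n : nat} (a : 'I_n.+1 -> nat) (u : 'rV[rat]_n) : Prop :=
  DeltaA a u /\
  forall x y, DeltaA a x -> DeltaA a y -> u = (1/2 : rat) *: (x + y) -> x = y.

(* columns of Lambda_a: primitive generators of rays through vertices of Delta_a *)
Definition isLambda {n : nat} (a : 'I_n.+1 -> nat) (l : 'rV[int]_n) : Prop :=
  primitive l /\
  exists u, isVertexA a u /\ exists t : rat, 0 < t /\ u = t *: intv l.

Definition bval {n : nat} (l : 'rV[int]_n) : int :=
  foldr Num.max 1 [seq - dotv (Vcol i) l | i <- enum 'I_n.+1].

Definition DeltaB {n : nat} (a : 'I_n.+1 -> nat) (y : 'rV[int]_n) : Prop :=
  forall l, isLambda a l -> dotv l y >= - bval l.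

Definition DeltaK {n : nat} (a : 'I_n.+1 -> nat) (y : 'rV[int]_n) : Prop :=
  forall l, isLambda a l -> dotv l y >= -1.

(* lattice points in the relative interior of the facet of Delta_{-K}
   with inner normal l (Delta_{-K} is a simplex whose facets are exactly
   { <l, y> = -1 } for the columns l of Lambda_a) *)
Definition relintFacet {n : nat} (a : 'I_n.+1 -> nat) (l y : 'rV[int]_n) : Prop :=
  dotv l y = -1 /\ forall l', isLambda a l' -> l' != l -> dotv l' y > -1.

Definition mY_is {n : nat} (a : 'I_n.+1 -> nat) (m : int) : Prop :=
  exists (L : nat) (Ls : seq 'rV[int]_n) (S : 'rV[int]_n -> nat),
    uniq Ls /\ (forall l, l \in Ls <-> isLambda a l) /\
    card_is (DeltaB a) L /\
    (forall l, l \in Ls -> card_is (relintFacet a l) (S l)) /\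
    m = L%:Z - 1 - n%:Z - (\sum_(l <- Ls) S l)%N%:Z.

Definition dgcd {n : nat} (a : 'I_n.+1 -> nat) (k : 'I_n.+1) : nat :=
  \big[gcdn/0%N]_(l < n.+1 | l != k) a l.

Definition nablaV {n : nat} (x : 'rV[rat]_n) : Prop :=
  conv (fun z => exists i : 'I_n.+1, z = intv (Vcol i)) x.

(* nabla' = conv(0, e_1, a_n/a_{n-1} e_2, ..., a_n/a_1 e_n); 0-based:
   a_k is a (k-1), e_i is ebas (i-1) *)
Definition nablaP {n : nat} (a : 'I_n.+1 -> nat) (x : 'rV[rat]_n) : Prop :=
  conv (fun z => z = 0 \/ exists i : 'I_n,
          z = ((a (inord n.-1))%:R / (a (inord (n.-1 - i)))%:R) *: ebas i) x.

Definition nablaFloor {n : nat} (a : 'I_n.+1 -> nat) (x : 'rV[rat]_n) : Prop :=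
  conv (fun z => z = 0 \/ exists i : 'I_n,
          z = ((a (inord n.-1) %/ a (inord (n.-1 - i)))%N%:R) *: ebas i) x.

(* Main.v *)
Require Import Defs.
From HB Require Import structures.
From mathcomp Require Import all_boot all_order all_algebra.
From mathcomp Require Import zify ring lra.
Import Order.TTheory GRing.Theory Num.Theory.
Local Open Scope ring_scope.
Set Implicit Arguments. Unset Strict Implicit. Unset Printing Implicit Defensive.

Definition wv {n : nat} (i : 'I_n.+1) (x : 'rV[rat]_n) : rat :=
  dotv (intv (Vcol i)) x.

Notation W := (widen_ord (leqnSn _)).

Lemma dotvDr {R : comPzRingType} n (u x y : 'rV[R]_n) :
  dotv u (x + y) = dotv u x + dotv u y.
Proof. by rewrite /dotv -big_split /=; apply: eq_bigr => k _; rewrite mxE mulrDr. Qed.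

Lemma dotvZr {R : comPzRingType} n (u x : 'rV[R]_n) c :
  dotv u (c *: x) = c * dotv u x.
Proof. rewrite /dotv mulr_sumr; apply: eq_bigr => k _; rewrite mxE; ring. Qed.

Lemma dotvZl {R : comPzRingType} n (u x : 'rV[R]_n) c :
  dotv (c *: u) x = c * dotv u x.
Proof. rewrite /dotv mulr_sumr; apply: eq_bigr => k _; rewrite mxE; ring. Qed.

Lemma dotvC {R : comPzRingType} n (u x : 'rV[R]_n) : dotv u x = dotv x u.
Proof. by apply: eq_bigr => k _; rewrite mulrC. Qed.

Lemma dotv_int n (l y : 'rV[int]_n) :
  (dotv l y)%:~R = dotv (intv l) (intv y) :> rat.
Proof.
rewrite /dotv rmorph_sum; apply: eq_bigr => k _; by rewrite !mxE rmorphM.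
Qed.

Lemma wv_W n (k : 'I_n) x : wv (W k) x = x ord0 k.
Proof.
rewrite /wv /dotv (bigD1 k) //= big1 ?addr0.
  by rewrite !mxE /= ltn_eqF // eqxx mul1r.
move=> m mk; rewrite !mxE /= ltn_eqF //.
by case: eqP => [/val_inj/eqP|]; [rewrite (negbTE mk)|rewrite mul0r].
Qed.

Lemma wv_max n x : wv (@ord_max n) x = - \sum_k x ord0 k.
Proof.
rewrite /wv /dotv -sumrN; apply: eq_bigr => k _.
by rewrite !mxE /= eqxx mulN1r.
Qed.

Lemma ordP n (i : 'I_n.+1) : i = ord_max \/ exists k : 'I_n, i = W k.
Proof.
case: (ltnP i n) => h.
  by right; exists (Ordinal h); apply: val_inj.
by left; apply: val_inj => /=; have := ltn_ord i; lia.
Qed.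

Lemma wvD n i (x y : 'rV[rat]_n) : wv i (x + y) = wv i x + wv i y.
Proof. exact: dotvDr. Qed.
Lemma wvZ n i (x : 'rV[rat]_n) c : wv i (c *: x) = c * wv i x.
Proof. exact: dotvZr. Qed.

Lemma sum_wv n (x : 'rV[rat]_n) : \sum_i wv i x = 0.
Proof.
rewrite big_ord_recr /= wv_max.
under eq_bigr do rewrite wv_W.
by rewrite subrr.
Qed.

Lemma wv_inj n (x y : 'rV[rat]_n) : (forall k : 'I_n, wv (W k) x = wv (W k) y) -> x = y.
Proof.
move=> h; apply/matrixP => i k; rewrite (ord1 i) -!wv_W; exact: h.
Qed.

Lemma wv_eq_but_one n (j : 'I_n.+1) (x y : 'rV[rat]_n) :
  (forall i, i != j -> wv i x = wv i y) -> x = y.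
Proof.
move=> h; apply: wv_inj => k.
case: (eqVneq (W k) j) => [->|/h //].
have := sum_wv x; have := sum_wv y; rewrite (bigD1 j) //= => hy.
rewrite (bigD1 j) //= => hx.
have e : \sum_(i < n.+1 | i != j) wv i x = \sum_(i < n.+1 | i != j) wv i y.
  by apply: eq_bigr => i /h.
rewrite e in hx; lra.
Qed.

Definition mkv {n : nat} (c : 'I_n.+1 -> rat) : 'rV[rat]_n := \row_k c (W k).

Lemma wv_mkv n (c : 'I_n.+1 -> rat) i : \sum_i c i = 0 -> wv i (mkv c) = c i.
Proof.
move=> hs; case: (ordP i) => [->|[k ->]]; last by rewrite wv_W mxE.
rewrite wv_max; move: hs; rewrite big_ord_recr /=.
have -> : \sum_k mkv c ord0 k = \sum_k c (W k) by apply: eq_bigr => k _; rewrite mxE.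
move=> h; lra.
Qed.

Definition Asum {n} (a : 'I_n.+1 -> nat) : nat := (\sum_i a i)%N.
Definition Uz {n} (a : 'I_n.+1 -> nat) (j : 'I_n.+1) : 'rV[int]_n :=
  \row_k (- (a (W k))%:Z + (Asum a)%:Z *+ (W k == j)).
Definition Wc {n} (a : 'I_n.+1 -> nat) (j i : 'I_n.+1) : rat :=
  - (a i)%:R + (Asum a)%:R *+ (i == j).

Lemma intv_Uz n (a : 'I_n.+1 -> nat) j : intv (Uz a j) = mkv (Wc a j).
Proof.
apply/matrixP => i k; rewrite !mxE /Wc.
by rewrite rmorphD rmorphN rmorphMn.
Qed.

Lemma sum_Wc n (a : 'I_n.+1 -> nat) j : \sum_i Wc a j i = 0.
Proof.
rewrite /Wc big_split /= sumrN.
have -> : \sum_(i < n.+1) (Asum a)%:R *+ (i == j) = (Asum a)%:R :> rat.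
  rewrite (bigD1 j) //= big1 ?eqxx ?addr0 //.
  by move=> i /negbTE ->.
by rewrite /Asum natr_sum addNr.
Qed.

Lemma wv_Uz n (a : 'I_n.+1 -> nat) j i : wv i (intv (Uz a j)) = Wc a j i.
Proof. by rewrite intv_Uz wv_mkv // sum_Wc. Qed.

Lemma tight_Uz n (a : 'I_n.+1 -> nat) j u :
  (forall i, i != j -> wv i u = - (a i)%:R) -> u = intv (Uz a j).
Proof.
move=> h; apply: (wv_eq_but_one (j:=j)) => i ij.
by rewrite h // wv_Uz /Wc (negbTE ij) addr0.
Qed.

Lemma Uz_vertex n (a : 'I_n.+1 -> nat) j : isVertexA a (intv (Uz a j)).
Proof.
split.
  move=> i; rewrite -/(wv i _) wv_Uz /Wc; case: (i == j) => /=; last by rewrite addr0.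
  by rewrite lerDl.
move=> x y hx hy e; apply: (wv_eq_but_one (j:=j)) => i ij.
have := hx i; have := hy i; rewrite -!/(wv i _) => h1 h2.
have := wv_Uz a j i; rewrite e wvZ wvD /Wc (negbTE ij) addr0 => h3.
lra.
Qed.

Lemma vertex_tight n (a : 'I_n.+1 -> nat) u :
  isVertexA a u -> exists j, forall i, i != j -> wv i u = - (a i)%:R.
Proof.
move=> [hu hext].
have hu' : forall i, - (a i)%:R <= wv i u by move=> i; exact: hu i.
case: (boolP [exists j, wv j u != - (a j)%:R]); last first.
  move/existsPn => h; exists ord0 => i _; exact/eqP/negPn/h.
move/existsP => [j hj]; exists j => i ij; apply/eqP/negPn/negP => hi.
pose si := wv i u + (a i)%:R; pose sj := wv j u + (a j)%:R.
have si0 : 0 < si by rewrite /si; have := hu' i; rewrite le_eqVlt eq_sym (negbTE hi) /=; lra.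
have sj0 : 0 < sj by rewrite /sj; have := hu' j; rewrite le_eqVlt eq_sym (negbTE hj) /=; lra.
pose e := Num.min si sj.
have e0 : 0 < e by rewrite /e lt_min si0 sj0.
have ei : e <= si by rewrite /e ge_min lexx.
have ej : e <= sj by rewrite /e ge_min lexx orbT.
move: ei ej; rewrite /si /sj => ei ej.
pose c := fun m : 'I_n.+1 => (m == i)%:R - (m == j)%:R : rat.
have sc : \sum_m c m = 0.
  rewrite /c big_split /= sumrN (bigD1 i) //= big1 ?eqxx ?addr0; last by move=> m /negbTE ->.
  rewrite (bigD1 j) //= big1 ?eqxx ?addr0 ?subrr //; by move=> m /negbTE ->.
pose d := mkv c.
have wd : forall m, wv m d = c m by move=> m; rewrite wv_mkv.
have hxy : u + e *: d = u - e *: d.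
  apply: hext.
  - move=> m; rewrite -/(wv m _) wvD wvZ wd /c.
    have := hu' m; case: eqP => [->|_]; case: eqP => [->|_] /=; lra.
  - move=> m; rewrite -/(wv m _) wvD -scaleNr wvZ wd /c.
    have := hu' m; case: eqP => [->|_]; case: eqP => [->|_] /=; lra.
  - by apply/matrixP => p q; rewrite !mxE; field.
have := congr1 (wv i) hxy; rewrite wvD -scaleNr wvD !wvZ wd /c eqxx (negbTE ij) /=.
lra.
Qed.

Lemma foldr_max_ge1 (s : seq int) : 1 <= foldr Num.max 1 s.
Proof. by elim: s => //= x s ih; rewrite le_max ih orbT. Qed.

Lemma foldr_max_ge (s : seq int) x : x \in s -> x <= foldr Num.max 1 s.
Proof.
elim: s => //= y s ih; rewrite inE => /orP [/eqP ->|/ih h].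
  by rewrite le_max lexx.
by rewrite le_max h orbT.
Qed.

Lemma foldr_max_cases (s : seq int) : foldr Num.max 1 s = 1 \/ foldr Num.max 1 s \in s.
Proof.
elim: s => [|y s ih] /=; first by left.
rewrite /Num.max; case: ifP => _.
  by case: ih => [->|h]; [left|right; rewrite inE h orbT].
by right; rewrite inE eqxx.
Qed.

Lemma bval_ge1 n (l : 'rV[int]_n) : 1 <= bval l.
Proof. exact: foldr_max_ge1. Qed.

Lemma bval_ge n (l : 'rV[int]_n) i : - dotv (Vcol i) l <= bval l.
Proof. by apply: foldr_max_ge; apply: map_f; rewrite mem_enum. Qed.

Lemma bval_cases n (l : 'rV[int]_n) :
  bval l = 1 \/ exists i, bval l = - dotv (Vcol i) l.
Proof.
case: (foldr_max_cases [seq - dotv (Vcol i) l | i <- enum 'I_n.+1]) => h; first by left.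
right; move/mapP: h => [i _ e]; by exists i.
Qed.

Lemma wv_int n i (l : 'rV[int]_n) : (dotv (Vcol i) l)%:~R = wv i (intv l).
Proof. by rewrite dotv_int. Qed.

Lemma intvZ n (l : 'rV[int]_n) (c : int) : intv (c *: l) = c%:~R *: intv l.
Proof. by apply/matrixP => i k; rewrite !mxE intrM. Qed.

Lemma intv_inj n (x y : 'rV[int]_n) : intv x = intv y -> x = y.
Proof.
move=> h; apply/matrixP => i k; have := congr1 (fun m : 'rV[rat]_n => m i k) h.
by rewrite !mxE => /intr_inj.
Qed.

Definition gg {n} (u : 'rV[int]_n) : nat := (\big[gcdn/0%N]_(k < n) `|u ord0 k|)%N.
Definition prim {n} (u : 'rV[int]_n) : 'rV[int]_n := \row_k (u ord0 k %/ (gg u)%:Z)%Z.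

Lemma prim_spec n (u : 'rV[int]_n) : (exists k, u ord0 k != 0) ->
  [/\ (0 < gg u)%N, u = (gg u)%:Z *: prim u & primitive (prim u)].
Proof.
move=> [k0 hk0].
set g := gg u.
have hd : forall k, (g %| `|u ord0 k|)%N by move=> k; apply: (biggcdn_inf k).
have g0 : (0 < g)%N.
  by apply: (dvdn_gt0 _ (hd k0)); rewrite absz_gt0.
have hdz : forall k, (g%:Z %| u ord0 k)%Z by move=> k; rewrite dvdzE.
set l := prim u.
have ue : u = g%:Z *: l.
  apply/matrixP => i k; rewrite (ord1 i) !mxE mulrC divzK //.
split => //.
rewrite /primitive; set h := (\big[gcdn/0%N]_(k < n) _)%N.
have : (h * g %| g)%N.
  apply/dvdn_biggcdP => k _.
  have -> : `|u ord0 k|%N = (`|l ord0 k| * g)%N.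
    by rewrite {1}ue mxE abszM mulnC.
  rewrite dvdn_pmul2r //; exact: (biggcdn_inf k).
rewrite -{2}(mul1n g) dvdn_pmul2r // dvdn1 => /eqP //.
Qed.

Lemma prim_int n (l : 'rV[int]_n) (r : rat) : primitive l ->
  (forall k, exists z : int, r * (l ord0 k)%:~R = z%:~R) -> exists z : int, r = z%:~R.
Proof.
move=> hp hk.
have : exists z : int, ((\big[gcdn/0%N]_(k < n) `|l ord0 k|)%N%:R : rat) * r = z%:~R.
  apply: (big_ind (fun x : nat => exists z : int, (x%:R : rat) * r = z%:~R)).
  - by exists 0; rewrite mul0r.
  - move=> x y [z1 h1] [z2 h2].
    have [u [v e]] := Bezoutz x y.
    exists (u * z1 + v * z2).
    have -> : (gcdn x y)%:R = ((gcdz x y)%:~R : rat) by [].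
    rewrite -e !rmorphD !rmorphM /= -!pmulrn -h1 -h2; ring.
  - move=> k _; have [z hz] := hk k.
    have : `|l ord0 k| = l ord0 k \/ `|l ord0 k| = - l ord0 k.
      by case: (lerP 0 (l ord0 k)) => h; [left; rewrite ger0_norm|right; rewrite ltr0_norm].
    case=> e.
      exists z; rewrite -hz mulrC; congr (_ * _).
      by rewrite -[RHS](congr1 (fun t : int => t%:~R) e) -abszE pmulrn.
    exists (- z); rewrite rmorphN /= -hz mulrC -mulrN; congr (_ * _).
    by rewrite -rmorphN /= -e -abszE pmulrn.
rewrite hp mul1r; exact.
Qed.

Lemma prim_unique n (u : 'rV[int]_n) (g : nat) (lam l : 'rV[int]_n) (t : rat) :
  (0 < g)%N -> u = g%:Z *: lam -> primitive lam -> primitive l -> 0 < t ->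
  intv u = t *: intv l -> l = lam.
Proof.
move=> g0 eu plam pl t0 et.
pose G : rat := (g%:Z)%:~R.
have g0' : 0 < G by rewrite /G ltr0z ltz_nat.
pose r := t / G.
have e1 : intv lam = r *: intv l.
  apply/matrixP => i k; have := congr1 (fun v : 'rV[rat]_n => v i k) et.
  rewrite eu intvZ !mxE -/G => h.
  by rewrite /r mulrAC -h mulrAC mulfV ?mul1r // gt_eqF.
have r0 : 0 < r by rewrite /r divr_gt0.
have e2 : intv l = r^-1 *: intv lam by rewrite e1 scalerA mulVf ?scale1r // gt_eqF.
have [p hp] : exists z : int, r = z%:~R.
  apply: (prim_int pl) => k; exists (lam ord0 k).
  by have := congr1 (fun v : 'rV[rat]_n => v ord0 k) e1; rewrite !mxE => ->.
have [q hq] : exists z : int, r^-1 = z%:~R.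
  apply: (prim_int plam) => k; exists (l ord0 k).
  by have := congr1 (fun v : 'rV[rat]_n => v ord0 k) e2; rewrite !mxE => ->.
have pq : p * q = 1.
  apply: (@intr_inj rat); rewrite intrM -hp -hq mulfV ?gt_eqF //.
have p0 : 0 < p by rewrite -(ltr0z rat) -hp.
have q0 : 0 < q by rewrite -(ltr0z rat) -hq invr_gt0.
have p1 : p = 1 by nia.
by apply: intv_inj; rewrite e2 hp p1 invr1 scale1r.
Qed.

Lemma exists_other n (hn : (2 <= n)%N) (j : 'I_n.+1) : exists k : 'I_n, W k != j.
Proof.
have h0 : (0 < n)%N by lia.
have h1 : (1 < n)%N by lia.
case: (eqVneq (W (Ordinal h0)) j) => [e|]; last by exists (Ordinal h0).
exists (Ordinal h1); rewrite -e; apply/eqP => /(congr1 val) /=; lia.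
Qed.

Lemma Asum_gt n (a : 'I_n.+1 -> nat) (ha : forall i, (0 < a i)%N) (hn : (1 <= n)%N) j :
  (a j < Asum a)%N.
Proof.
have [j' jj'] : exists j', j' != j.
  case: (eqVneq j ord0) => [->|h]; last by exists ord0; rewrite eq_sym.
  by exists ord_max; apply/eqP => /(congr1 val) /=; lia.
rewrite /Asum (bigD1 j) //= (bigD1 j') //=; have := ha j'; lia.
Qed.

Definition Lam {n} (a : 'I_n.+1 -> nat) (j : 'I_n.+1) : 'rV[int]_n := prim (Uz a j).
Definition gL {n} (a : 'I_n.+1 -> nat) (j : 'I_n.+1) : nat := gg (Uz a j).

Lemma Lam_spec n (a : 'I_n.+1 -> nat) (ha : forall i, (0 < a i)%N) (hn : (2 <= n)%N) j :
  [/\ (0 < gL a j)%N, Uz a j = (gL a j)%:Z *: Lam a j & primitive (Lam a j)].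
Proof.
apply: prim_spec; have [k hk] := exists_other hn j; exists k.
rewrite mxE (negbTE hk) addr0 oppr_eq0 eqz_nat; have := ha (W k); lia.
Qed.

Lemma dotV_Uz n (a : 'I_n.+1 -> nat) i j :
  dotv (Vcol i) (Uz a j) = - (a i)%:Z + (Asum a)%:Z *+ (i == j).
Proof.
apply: (@intr_inj rat); rewrite wv_int wv_Uz /Wc rmorphD rmorphN rmorphMn /=.
by rewrite -!pmulrn.
Qed.

Lemma dotvZr_int n (u x : 'rV[int]_n) (c : int) : dotv u (c *: x) = c * dotv u x.
Proof. rewrite /dotv mulr_sumr; apply: eq_bigr => k _; rewrite mxE; ring. Qed.

Lemma dotV_Lam n (a : 'I_n.+1 -> nat) (ha : forall i, (0 < a i)%N) (hn : (2 <= n)%N) i j :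
  (gL a j)%:Z * dotv (Vcol i) (Lam a j) = - (a i)%:Z + (Asum a)%:Z *+ (i == j).
Proof.
have [_ e _] := Lam_spec ha hn j.
by rewrite -dotvZr_int -e dotV_Uz.
Qed.

Lemma Lam_neg n (a : 'I_n.+1 -> nat) (ha : forall i, (0 < a i)%N) (hn : (2 <= n)%N) i j :
  i != j -> dotv (Vcol i) (Lam a j) <= -1.
Proof.
move=> ij; have := dotV_Lam ha hn i j; rewrite (negbTE ij) addr0.
have [g0 _ _] := Lam_spec ha hn j; have := ha i.
set g := gL a j; set X := dotv _ _ => hai h.
have hai' : (0 < (a i)%:Z) by rewrite ltz_nat.
have g0' : (0 < g%:Z) by rewrite ltz_nat.
nia.
Qed.

Lemma Lam_pos n (a : 'I_n.+1 -> nat) (ha : forall i, (0 < a i)%N) (hn : (2 <= n)%N) j :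
  0 < dotv (Vcol j) (Lam a j).
Proof.
have := dotV_Lam ha hn j j; rewrite eqxx /=.
have [g0 _ _] := Lam_spec ha hn j; have := @Asum_gt n a ha (ltnW hn) j.
set g := gL a j; set X := dotv _ _ => hA h.
have hA' : ((a j)%:Z < (Asum a)%:Z) by rewrite ltz_nat.
have g0' : (0 < g%:Z) by rewrite ltz_nat.
nia.
Qed.

Lemma Lam_inj n (a : 'I_n.+1 -> nat) (ha : forall i, (0 < a i)%N) (hn : (2 <= n)%N) j1 j2 :
  j1 != j2 -> Lam a j1 != Lam a j2.
Proof.
move=> h; apply/eqP => e.
have := Lam_pos ha hn j1; have := Lam_neg ha hn h; rewrite e; lia.
Qed.

Lemma Lam_isLambda n (a : 'I_n.+1 -> nat) (ha : forall i, (0 < a i)%N) (hn : (2 <= n)%N) j :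
  isLambda a (Lam a j).
Proof.
have [g0 e p] := Lam_spec ha hn j.
split => //; exists (intv (Uz a j)); split; first exact: Uz_vertex.
exists ((gL a j)%:Z)%:~R; split; first by rewrite ltr0z ltz_nat.
by rewrite {1}e intvZ.
Qed.

Lemma isLambda_char n (a : 'I_n.+1 -> nat) (ha : forall i, (0 < a i)%N) (hn : (2 <= n)%N) l :
  isLambda a l -> exists j, l = Lam a j.
Proof.
move=> [pl [u [hv [t [t0 eu]]]]].
have [j hj] := vertex_tight hv.
have eU := tight_Uz hj.
exists j; have [g0 e p] := Lam_spec ha hn j.
apply: (prim_unique g0 e p pl t0); by rewrite -eU.
Qed.

Definition sA {n} (a : 'I_n.+1 -> nat) (y : 'rV[int]_n) : int :=
  \sum_k (a (W k))%:Z * y ord0 k.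

Lemma WW n (k k0 : 'I_n) : (W k == W k0) = (k == k0).
Proof. by apply/idP/idP => /eqP h; apply/eqP; [apply: val_inj; exact: (congr1 val h)|rewrite h]. Qed.

Lemma dotUz_W n (a : 'I_n.+1 -> nat) (k0 : 'I_n) y :
  dotv (Uz a (W k0)) y = (Asum a)%:Z * y ord0 k0 - sA a y.
Proof.
rewrite /dotv /sA.
have -> : \sum_(k < n) Uz a (W k0) ord0 k * y ord0 k =
   \sum_(k < n) ((Asum a)%:Z *+ (k == k0) * y ord0 k) - \sum_k (a (W k))%:Z * y ord0 k.
  rewrite -sumrB; apply: eq_bigr => k _; rewrite mxE WW; ring.
congr (_ - _); rewrite (bigD1 k0) //= big1 ?addr0 ?eqxx //.
by move=> k /negbTE ->; rewrite mul0r.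
Qed.

Lemma dotUz_max n (a : 'I_n.+1 -> nat) y :
  dotv (Uz a ord_max) y = - sA a y.
Proof.
rewrite /dotv /sA -sumrN; apply: eq_bigr => k _; rewrite mxE.
have -> : (W k == ord_max) = false by apply/eqP => /(congr1 val) /=; have := ltn_ord k; lia.
by rewrite addr0 mulNr.
Qed.

Lemma DeltaB_ineq n (a : 'I_n.+1 -> nat) (ha : forall i, (0 < a i)%N) (hn : (2 <= n)%N)
  y j (M : nat) : (forall i, i != j -> (a i <= M)%N) -> DeltaB a y ->
  - (M%:Z) <= dotv (Uz a j) y.
Proof.
move=> hM hy.
have [g0 e p] := Lam_spec ha hn j.
have hl := hy _ (Lam_isLambda ha hn j).
have eU : dotv (Uz a j) y = (gL a j)%:Z * dotv (Lam a j) y.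
  by rewrite {1}e dotvC dotvZr_int dotvC.
rewrite eU.
have g0' : (0 < (gL a j)%:Z) by rewrite ltz_nat.
have gM : ((gL a j)%:Z <= M%:Z).
  have [k hk] := exists_other hn j.
  have h1 := hM _ hk.
  have h2 : (gL a j <= a (W k))%N.
    apply: dvdn_leq; first exact: ha.
    have -> : a (W k) = `|Uz a j ord0 k|%N by rewrite mxE (negbTE hk) addr0 abszN absz_nat.
    exact: (biggcdn_inf k).
  rewrite lez_nat; exact: leq_trans h2 h1.
case: (bval_cases (Lam a j)) => [hb|[i hb]]; rewrite hb in hl.
  nia.
have := dotV_Lam ha hn i j.
case: (eqVneq i j) => [eij|ij] /=.
  subst i; rewrite mulr1n opprK in hl *.
  set X := dotv (Vcol j) _ in hl *; set Z := dotv (Lam a j) y in hl *  => h.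
  have : (0 <= (Asum a)%:Z - (a j)%:Z) by have := @Asum_gt n a ha (ltnW hn) j; rewrite subr_ge0 lez_nat; lia.
  nia.
rewrite addr0 opprK in hl *.
set X := dotv (Vcol i) _ in hl *; set Z := dotv (Lam a j) y in hl * => h.
have := hM _ ij; rewrite -lez_nat => hMi.
nia.
Qed.

Lemma wv_lam n (l : 'rV[int]_n) u t i : u = t *: intv l ->
  wv i u = t * (dotv (Vcol i) l)%:~R.
Proof. by move=> ->; rewrite wvZ wv_int. Qed.

Lemma dotv0r n (l : 'rV[int]_n) : dotv l 0 = 0.
Proof. by rewrite /dotv big1 // => k _; rewrite mxE mulr0. Qed.

Lemma inord_max n (hn : (1 <= n)%N) : (inord n.-1 : 'I_n.+1) != ord_max.
Proof.
apply/eqP => /(congr1 val) /=; rewrite inordK; lia.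
Qed.

Lemma y2_DeltaB n (a : 'I_n.+1 -> nat) (ha : forall i, (0 < a i)%N)
  (hs : forall i j : 'I_n.+1, (i <= j)%N -> (a i <= a j)%N) (hn : (2 <= n)%N)
  (k0 : 'I_n) (h2 : (2 * a (W k0) <= a (inord n.-1))%N) :
  DeltaB a (2%:Z *: Vcol (W k0)).
Proof.
move=> l [pl [u [hv [t [t0 eu]]]]].
have [j hj] := vertex_tight hv.
rewrite dotvZr_int dotvC; set X := dotv (Vcol (W k0)) l.
have hX := wv_lam (W k0) eu; rewrite -/X in hX.
case: (eqVneq j (W k0)) => [ej|nj].
  have : 0 <= wv j u.
    have := sum_wv u; rewrite (bigD1 j) //=.
    have -> : \sum_(i < n.+1 | i != j) wv i u = - \sum_(i < n.+1 | i != j) (a i)%:R.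
      by rewrite -sumrN; apply: eq_bigr => i /hj.
    have : 0 <= \sum_(i < n.+1 | i != j) ((a i)%:R : rat) by apply: sumr_ge0 => i _; rewrite ler0n.
    lra.
  rewrite ej hX pmulr_rge0 // ler0z => hX0.
  have := bval_ge1 l; lia.
pose i : 'I_n.+1 := if j == ord_max then inord n.-1 else ord_max.
have ij : i != j.
  rewrite /i; case: (eqVneq j ord_max) => [->|h] /=; last by rewrite eq_sym.
  exact: inord_max (ltnW hn).
have hai : (a (inord n.-1) <= a i)%N.
  rewrite /i; case: (j == ord_max) => //; apply: hs; rewrite /= inordK; lia.
have hY := wv_lam i eu; rewrite hj // in hY.
have hX' : wv (W k0) u = -(a (W k0))%:R by apply: hj; rewrite eq_sym.
rewrite hX' in hX.
set Y := dotv (Vcol i) l in hY.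
have hb := bval_ge l i; rewrite -/Y in hb.
suff : Y <= 2 * X by lia.
rewrite -(ler_int rat) -(ler_pM2l t0) intrM -hY mulrCA -hX.
have : (2 * (a (W k0))%:R <= (a i)%:R :> rat).
  by rewrite -natrM ler_nat; apply: leq_trans hai.
move=> h; rewrite [_%:~R]/= ; lra.
Qed.

Lemma DeltaB_0 n (a : 'I_n.+1 -> nat) : DeltaB a 0.
Proof. by move=> l _; rewrite dotv0r oppr_le0; apply: le_trans (bval_ge1 l). Qed.

Lemma DeltaB_V n (a : 'I_n.+1 -> nat) i : DeltaB a (Vcol i).
Proof. by move=> l _; rewrite dotvC lerNl; exact: bval_ge. Qed.

Lemma relint_DeltaB n (a : 'I_n.+1 -> nat) l y : relintFacet a l y -> DeltaB a y.
Proof.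
move=> [h1 h2] l' hl'; have := bval_ge1 l'.
case: (eqVneq l' l) => [->|ne]; first by rewrite h1; lia.
have := h2 _ hl' ne; lia.
Qed.

Lemma no_relint n (a : 'I_n.+1 -> nat) (ha : forall i, (0 < a i)%N) (hn : (2 <= n)%N)
  l y j1 j2 : j1 != j2 -> dotv (Lam a j1) y <= -1 -> dotv (Lam a j2) y <= -1 ->
  ~ relintFacet a l y.
Proof.
move=> j12 h1 h2 [_ hr].
case: (eqVneq (Lam a j1) l) => [e1|n1]; last by have := hr _ (Lam_isLambda ha hn j1) n1; lia.
have n2 : Lam a j2 != l by rewrite -e1 eq_sym; exact: Lam_inj.
have := hr _ (Lam_isLambda ha hn j2) n2; lia.
Qed.

Lemma two_others n (hn : (2 <= n)%N) (i : 'I_n.+1) :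
  exists j1 j2 : 'I_n.+1, [/\ j1 != j2, j1 != i & j2 != i].
Proof.
have h1 : (1 < n.+1)%N by lia.
have h0 : (0 < n.+1)%N by lia.
pose o0 : 'I_n.+1 := Ordinal h0. pose o1 : 'I_n.+1 := Ordinal h1.
have n01 : o0 != o1 by [].
have n0m : o0 != ord_max by apply/eqP => /(congr1 val) /=; lia.
have n1m : o1 != ord_max by apply/eqP => /(congr1 val) /=; lia.
case: (eqVneq i o0) => [->|i0].
  by exists o1, ord_max; rewrite n1m eq_sym n01 eq_sym n0m.
case: (eqVneq i o1) => [->|i1].
  by exists o0, ord_max; rewrite n0m n01 eq_sym n1m.
by exists o0, o1; rewrite n01 eq_sym i0 eq_sym i1.
Qed.

Lemma V_not_relint n (a : 'I_n.+1 -> nat) (ha : forall i, (0 < a i)%N) (hn : (2 <= n)%N) l i :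
  ~ relintFacet a l (Vcol i).
Proof.
have [j1 [j2 [j12 h1 h2]]] := two_others hn i.
apply: (no_relint ha hn j12); rewrite dotvC; apply: Lam_neg => //; by rewrite eq_sym.
Qed.

Lemma zero_not_relint n (a : 'I_n.+1 -> nat) l : ~ relintFacet a l 0.
Proof. by move=> [h _]; rewrite dotv0r in h. Qed.

Lemma y2_not_relint n (a : 'I_n.+1 -> nat) (ha : forall i, (0 < a i)%N) (hn : (2 <= n)%N) l i :
  ~ relintFacet a l (2%:Z *: Vcol i).
Proof.
have [j1 [j2 [j12 h1 h2]]] := two_others hn i.
apply: (no_relint ha hn j12); rewrite dotvZr_int dotvC.
  have := Lam_neg ha hn (j:=j1) (i:=i); rewrite eq_sym h1 => /(_ isT) hX.
  have -> : 2%:Z * dotv (Vcol i) (Lam a j1) = dotv (Vcol i) (Lam a j1) + dotv (Vcol i) (Lam a j1) by ring.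
  by apply: le_trans (lerD hX hX) _.
have := Lam_neg ha hn (j:=j2) (i:=i); rewrite eq_sym h2 => /(_ isT) hX.
have -> : 2%:Z * dotv (Vcol i) (Lam a j2) = dotv (Vcol i) (Lam a j2) + dotv (Vcol i) (Lam a j2) by ring.
by apply: le_trans (lerD hX hX) _.
Qed.

Definition Pts n : seq 'rV[int]_n := 0 :: [seq Vcol i | i <- enum 'I_n.+1].

Lemma Vcol_W n (k m : 'I_n) : Vcol (W k) ord0 m = (m == k)%:Z.
Proof.
rewrite mxE /=; have := ltn_ord k; case: eqP => [/= e|_]; first lia.
by case: (eqVneq m k) => [->|h]; rewrite ?eqxx //; case: eqP => // /val_inj e; rewrite e eqxx in h.
Qed.

Lemma Vcol_max n (m : 'I_n) : Vcol (@ord_max n) ord0 m = -1.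
Proof. by rewrite mxE /= eqxx. Qed.

Lemma Vcol_inj n (hn : (1 <= n)%N) : injective (@Vcol n).
Proof.
move=> i j.
case: (ordP i) => [->|[k ->]]; case: (ordP j) => [->|[k' ->]] // e.
- have := congr1 (fun v : 'rV[int]_n => v ord0 k') e.
  by rewrite Vcol_max Vcol_W eqxx.
- have := congr1 (fun v : 'rV[int]_n => v ord0 k) e.
  by rewrite Vcol_max Vcol_W eqxx.
- have := congr1 (fun v : 'rV[int]_n => v ord0 k) e.
  rewrite !Vcol_W eqxx; case: eqP => // -> _; done.
Qed.

Lemma Vcol_nz n (hn : (1 <= n)%N) i : Vcol i != 0 :> 'rV[int]_n.
Proof.
apply/eqP => e.
case: (ordP i) => [eq|[k eq]]; subst i.
  by have := congr1 (fun v : 'rV[int]_n => v ord0 (Ordinal hn)) e; rewrite Vcol_max mxE.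
by have := congr1 (fun v : 'rV[int]_n => v ord0 k) e; rewrite Vcol_W eqxx mxE.
Qed.

Lemma Pts_uniq n (hn : (1 <= n)%N) : uniq (Pts n).
Proof.
rewrite /Pts /= map_inj_uniq ?enum_uniq ?andbT; last exact: Vcol_inj.
apply/mapP => [[i _ e]]; have := Vcol_nz hn i; by rewrite -e eqxx.
Qed.

Lemma Pts_size n : size (Pts n) = n.+2.
Proof. by rewrite /= size_map size_enum_ord. Qed.

Lemma in_Pts n (y : 'rV[int]_n) : y \in Pts n <-> y = 0 \/ exists i, y = Vcol i.
Proof.
rewrite inE; split.
  case/orP => [/eqP ->|/mapP [i _ ->]]; [by left|by right; exists i].
case => [->|[i ->]]; first by rewrite eqxx.
by apply/orP; right; apply: map_f; rewrite mem_enum.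
Qed.

Lemma Pts_DeltaB n (a : 'I_n.+1 -> nat) y : y \in Pts n -> DeltaB a y.
Proof. by case/in_Pts => [->|[i ->]]; [exact: DeltaB_0|exact: DeltaB_V]. Qed.

Lemma Pts_not_relint n (a : 'I_n.+1 -> nat) (ha : forall i, (0 < a i)%N) (hn : (2 <= n)%N) l y :
  y \in Pts n -> ~ relintFacet a l y.
Proof. by case/in_Pts => [->|[i ->]]; [exact: zero_not_relint|exact: V_not_relint]. Qed.

Lemma y2_notin n (hn : (1 <= n)%N) (k0 : 'I_n) : (2%:Z *: Vcol (W k0)) \notin Pts n.
Proof.
apply/negP => /in_Pts [e|[i e]].
  by have := congr1 (fun v : 'rV[int]_n => v ord0 k0) e; rewrite mxE Vcol_W eqxx [RHS]mxE.
have := congr1 (fun v : 'rV[int]_n => v ord0 k0) e; rewrite mxE Vcol_W eqxx.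
case: (ordP i) => [->|[k ->]]; rewrite ?Vcol_max ?Vcol_W //.
by case: (k0 == k).
Qed.

Lemma classify n (c : 'I_n -> int) (K T : int) (y : 'rV[int]_n) :
  (forall k, 0 < c k) -> 0 < K -> (forall k, T < 2 * c k) ->
  \sum_k c k * y ord0 k <= T ->
  (forall k, - K <= (\sum_k c k + K) * y ord0 k - \sum_k c k * y ord0 k) ->
  y \in Pts n.
Proof.
move=> hc hK hT hs hk.
set s := \sum_k c k * y ord0 k in hs hk.
set C := \sum_k c k in hk.
have C0 : 0 <= C by apply: sumr_ge0 => k _; exact: ltW.
case: (boolP [forall k, 0 <= y ord0 k]) => [/forallP hpos | /forallPn [k0 hk0]].
  case: (boolP [exists k, y ord0 k != 0]) => [/existsP [k hk0] | /existsPn hz]; last first.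
    apply/in_Pts; left; apply/matrixP => i m; rewrite (ord1 i) mxE; exact/eqP/negPn/hz.
  have hk1 : 1 <= y ord0 k by have := hpos k; move: hk0; lia.
  have hrest : forall P : pred 'I_n, 0 <= \sum_(k' | P k') c k' * y ord0 k'.
    by move=> P; apply: sumr_ge0 => k' _; apply: mulr_ge0; [exact: ltW|exact: hpos].
  have es : s = c k * y ord0 k + \sum_(k' | k' != k) c k' * y ord0 k' by rewrite /s (bigD1 k).
  have yk : y ord0 k = 1.
    have hr1 : 0 <= \sum_(k' | k' != k) c k' * y ord0 k' := hrest _.
    have := hT k; have := hc k; nia.
  have yo : forall k', k' != k -> y ord0 k' = 0.
    move=> k' nk; apply/eqP/negPn/negP => hnz.
    have hk'1 : 1 <= y ord0 k' by have := hpos k'; move: hnz; lia.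
    have es' : \sum_(k'' | k'' != k) c k'' * y ord0 k'' =
        c k' * y ord0 k' + \sum_(k'' | (k'' != k) && (k'' != k')) c k'' * y ord0 k''.
      by rewrite (bigD1 k').
    have hr2 : 0 <= \sum_(k'' | (k'' != k) && (k'' != k')) c k'' * y ord0 k'' := hrest _.
    have := hT k; have := hT k'; have := hc k; have := hc k'; nia.
  apply/in_Pts; right; exists (W k); apply/matrixP => i m; rewrite (ord1 i) Vcol_W.
  by case: (eqVneq m k) => [->|h]; [rewrite yk|rewrite yo].
have hw : 0 <= \sum_k c k * ((C + K) * y ord0 k - s + K).
  apply: sumr_ge0 => k _; apply: mulr_ge0; first exact: ltW.
  by have := hk k; lia.
have ew : \sum_k c k * ((C + K) * y ord0 k - s + K) = K * (s + C).
  have -> : \sum_k c k * ((C + K) * y ord0 k - s + K) =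
      (C + K) * \sum_k c k * y ord0 k + (K - s) * \sum_k c k.
    rewrite !mulr_sumr -big_split /=; apply: eq_bigr => k _; ring.
  rewrite -/s -/C; ring.
rewrite ew in hw.
have sC : - C <= s by nia.
have yge : forall k, -1 <= y ord0 k by move=> k; have := hk k; nia.
have yk0 : y ord0 k0 = -1 by have := yge k0; move: hk0; lia.
have sC' : s = - C by have := hk k0; rewrite yk0; nia.
have e0 : \sum_k c k * (y ord0 k + 1) = 0.
  have -> : \sum_k c k * (y ord0 k + 1) = s + C.
    by rewrite /s /C -big_split /=; apply: eq_bigr => k _; ring.
  by rewrite sC' addNr.
have hy : forall k, y ord0 k = -1.
  move=> k.
  have h : c k * (y ord0 k + 1) = 0.
    apply: (psumr_eq0P (P := xpredT) (F := fun k => c k * (y ord0 k + 1))) => //.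
    by move=> i _; apply: mulr_ge0; [exact: ltW|have := yge i; lia].
  move: h; have := hc k; have := yge k; nia.
apply/in_Pts; right; exists ord_max; apply/matrixP => i m; rewrite (ord1 i) Vcol_max.
exact: hy.
Qed.

Definition sumv {n} (x : 'rV[rat]_n) : rat := \sum_k x ord0 k.
Definition Hn {n} (x : 'rV[rat]_n) : Prop :=
  sumv x <= 1 /\ forall k, -1 <= (n.+1)%:R * x ord0 k - sumv x.

Lemma lin_conv n (S : 'rV[rat]_n -> Prop) (f : 'rV[rat]_n -> rat) (b : rat) x :
  (forall x y, f (x + y) = f x + f y) -> (forall c x, f (c *: x) = c * f x) ->
  (forall z, S z -> f z <= b) -> conv S x -> f x <= b.
Proof.
move=> fD fZ hS [m [p [w [hp [hw [h1 ->]]]]]].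
have f0 : f 0 = 0 by have := fD 0 0; rewrite addr0 => h; lra.
rewrite (big_morph f fD f0).
under eq_bigr do rewrite fZ.
have -> : b = \sum_i w i * b by rewrite -mulr_suml h1 mul1r.
apply: ler_sum => i _; apply: ler_wpM2l; [exact: hw|exact: hS].
Qed.

Lemma sumvD n (x y : 'rV[rat]_n) : sumv (x + y) = sumv x + sumv y.
Proof. by rewrite /sumv -big_split; apply: eq_bigr => k _; rewrite mxE. Qed.
Lemma sumvZ n (x : 'rV[rat]_n) c : sumv (c *: x) = c * sumv x.
Proof. by rewrite /sumv mulr_sumr; apply: eq_bigr => k _; rewrite mxE. Qed.

Lemma H_conv n (S : 'rV[rat]_n -> Prop) x : (forall z, S z -> Hn z) -> conv S x -> Hn x.
Proof.
move=> hS hc; split.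
  apply: (lin_conv (f := sumv)) hc; [exact: sumvD|by move=> c u; exact: sumvZ|by move=> z /hS []].
move=> k.
suff : sumv x - (n.+1)%:R * x ord0 k <= 1 by lra.
apply: (lin_conv (f := fun x => sumv x - (n.+1)%:R * x ord0 k)) hc.
- by move=> u v; rewrite sumvD mxE; ring.
- by move=> c u; rewrite sumvZ mxE; ring.
- by move=> z /hS [_ /(_ k)]; lra.
Qed.

Lemma sumv_Vcol n i : sumv (intv (@Vcol n i)) = if i == ord_max then - n%:R else 1.
Proof.
rewrite /sumv.
case: (ordP i) => [->|[k ->]].
  rewrite eqxx; under eq_bigr do rewrite mxE Vcol_max.
  by rewrite sumr_const card_ord -mulNrn.
have -> : (W k == ord_max) = false by apply/eqP => /(congr1 val) /=; have := ltn_ord k; lia.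
under eq_bigr do rewrite mxE Vcol_W.
rewrite (bigD1 k) //= big1 ?eqxx ?addr0 //.
by move=> m /negbTE ->.
Qed.

Lemma H_Vcol n i : Hn (intv (@Vcol n i)).
Proof.
rewrite /Hn sumv_Vcol; case: (ordP i) => [->|[k ->]].
  have h0 : (0 : rat) <= n%:R by rewrite ler0n.
  rewrite eqxx; split; first lra.
  by move=> m; rewrite mxE Vcol_max -natr1; lra.
have -> : (W k == ord_max) = false by apply/eqP => /(congr1 val) /=; have := ltn_ord k; lia.
split => // m; rewrite mxE Vcol_W.
have : (0 : rat) <= n%:R by rewrite ler0n.
by case: (m == k) => /=; rewrite -natr1; lra.
Qed.

Lemma nabla_H n x : @nablaV n x -> Hn x.
Proof. by apply: H_conv => z [i ->]; exact: H_Vcol. Qed.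

Lemma H_nabla n x : Hn x -> @nablaV n x.
Proof.
move=> [h1 h2].
have N0 : (0 : rat) < (n.+1)%:R by rewrite ltr0n.
pose t := (1 - sumv x) / (n.+1)%:R.
pose w := fun i : 'I_n.+1 => (if i == ord_max then 0 else wv i x) + t.
exists n.+1, (fun i => intv (Vcol i)), w; split; first by move=> i; exists i.
have t0 : 0 <= t by rewrite /t divr_ge0 ?subr_ge0 // ltW.
have wW : forall k, w (W k) = x ord0 k + t.
  move=> k; rewrite /w; have -> : (W k == ord_max) = false.
    by apply/eqP => /(congr1 val) /=; have := ltn_ord k; lia.
  by rewrite wv_W.
have wM : w ord_max = t by rewrite /w eqxx add0r.
split.
  move=> i; case: (ordP i) => [->|[k ->]]; first by rewrite wM.
  rewrite wW.
  have -> : x ord0 k + t = ((n.+1)%:R * x ord0 k - sumv x + 1) / (n.+1)%:R.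
    by rewrite /t; field; rewrite addrC natr1 pnatr_eq0.
  by apply: divr_ge0; [have := h2 k; lra | exact: ltW].
split.
  rewrite big_ord_recr /= wM.
  under eq_bigr do rewrite wW.
  rewrite big_split /= sumr_const card_ord -/(sumv x) -mulr_natl.
  rewrite /t -natr1; field.
  by have := ler0n rat n; rewrite addrC; move=> h; apply: lt0r_neq0; lra.
apply: wv_inj => k.
rewrite !wv_W summxE.
rewrite big_ord_recr /= mxE mxE Vcol_max wM.
under eq_bigr do rewrite mxE mxE Vcol_W.
rewrite (bigD1 k) //= eqxx wW big1.
  by rewrite mulr1 addr0; ring.
move=> m mk; have -> : (k == m) = false by rewrite eq_sym; exact: negbTE.
by rewrite mulr0.
Qed.

Lemma card_union (T T' : eqType) (Ls : seq T') (P : T' -> T -> Prop) (S : T' -> nat) :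
  uniq Ls -> (forall l, l \in Ls -> card_is (P l) (S l)) ->
  (forall l1 l2 y, l1 \in Ls -> l2 \in Ls -> P l1 y -> P l2 y -> l1 = l2) ->
  card_is (fun y => exists2 l, l \in Ls & P l y) (\sum_(l <- Ls) S l)%N.
Proof.
elim: Ls => [|l Ls ih] /=.
  move=> _ _ _; exists [::]; split => //; split; [move=> x; split => //; by case=> l; rewrite in_nil | by rewrite big_nil].
move=> /andP [lLs uLs] hc hd.
have mb : forall x, x \in Ls -> x \in l :: Ls by move=> x hx; rewrite inE hx orbT.
have [s2 [u2 [m2 z2]]] := ih uLs (fun l' h => hc l' (mb _ h))
  (fun l1 l2 y h1 h2 => hd l1 l2 y (mb _ h1) (mb _ h2)).
have [s1 [u1 [m1 z1]]] := hc l (mem_head _ _).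
exists (s1 ++ s2); split.
  rewrite cat_uniq u1 u2 andbT /=; apply/hasPn => x /m2 [l' hl' hP].
  apply/negP => /m1 hP'.
  have e := hd l l' x (mem_head _ _) (mb _ hl') hP' hP.
  by move: lLs; rewrite e hl'.
split; last by rewrite size_cat z1 z2 big_cons.
move=> x; rewrite mem_cat; split.
  case/orP => [/m1 h|/m2 [l' h1 h2]]; first by exists l; rewrite ?mem_head.
  by exists l' => //; exact: mb.
move=> [l' hl' hP]; move: hl'; rewrite inE => /orP [/eqP e|h].
  by apply/orP; left; apply/m1; rewrite -e.
by apply/orP; right; apply/m2; exists l'.
Qed.

Lemma card_le (T : eqType) (P Q : T -> Prop) m L (t : seq T) :
  card_is P m -> card_is Q L -> (forall y, P y -> Q y) -> uniq t ->
  (forall y, y \in t -> Q y) -> (forall y, y \in t -> ~ P y) -> (m + size t <= L)%N.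
Proof.
move=> [sP [uP [mP zP]]] [sQ [uQ [mQ zQ]]] hPQ ut htQ htP.
rewrite -zP -zQ -size_cat; apply: uniq_leq_size.
  rewrite cat_uniq uP ut andbT /=; apply/hasPn => y yt; apply/negP => /mP hy.
  exact: (htP y yt).
move=> y; rewrite mem_cat => /orP [/mP/hPQ/mQ //|/htQ/mQ //].
Qed.

Lemma conv1 n (S : 'rV[rat]_n -> Prop) x : S x -> conv S x.
Proof.
move=> hx; exists 1%N, (fun _ => x), (fun _ => 1); split => //; split => //.
by rewrite big_ord1; split => //; rewrite big_ord1 scale1r.
Qed.

Lemma sumv_int n (y : 'rV[int]_n) : sumv (intv y) = (\sum_k y ord0 k)%:~R.
Proof. by rewrite /sumv rmorph_sum; apply: eq_bigr => k _; rewrite mxE. Qed.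

Lemma nabla_Pts n (y : 'rV[int]_n) : nablaV (intv y) <-> y \in Pts n.
Proof.
split; last first.
  move=> hy; apply: H_nabla; case/in_Pts: hy => [->|[i ->]]; last exact: H_Vcol.
  have e : intv (0 : 'rV[int]_n) = 0 by apply/matrixP => i k; rewrite !mxE.
  rewrite e /Hn /sumv; split; first by rewrite big1 // => k _; rewrite mxE.
  by move=> k; rewrite big1 ?mxE ?mulr0 ?subr0 // => m _; rewrite mxE.
move=> /nabla_H [h1 h2].
have s1 : \sum_(k < n) (1 : int) = n%:Z.
  by elim: (n) => [|m ih]; [rewrite big_ord0|rewrite big_ord_recr /= ih; lia].
apply: (classify (c := fun _ => 1) (K := 1) (T := 1)) => //.
- rewrite sumv_int in h1.
  have h1' : \sum_k y ord0 k <= 1 by rewrite -(ler_int rat) rmorph1.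
  by under eq_bigr do rewrite mul1r.
- move=> k; have := h2 k; rewrite sumv_int mxE.
  have -> : (n.+1)%:R * (y ord0 k)%:~R - (\sum_k y ord0 k)%:~R =
            (((n.+1)%:Z * y ord0 k - \sum_k y ord0 k)%:~R : rat).
    by rewrite rmorphB rmorphM /= -pmulrn.
  move=> hh; have : -1 <= (n.+1)%:Z * y ord0 k - \sum_k y ord0 k.
    by rewrite -(ler_int rat) rmorphN1.
  rewrite s1.
  have -> : \sum_k0 (1:int) * y ord0 k0 = \sum_k0 y ord0 k0 by apply: eq_bigr => m _; rewrite mul1r.
  lia.
Qed.

Lemma Asum_split n (a : 'I_n.+1 -> nat) :
  (Asum a)%:Z = \sum_k (a (W k))%:Z + (a ord_max)%:Z.
Proof. by rewrite /Asum big_ord_recr /= PoszD (big_morph Posz PoszD (erefl (Posz 0))). Qed.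

Lemma DeltaB_Pts_c4 n (a : 'I_n.+1 -> nat) (ha : forall i, (0 < a i)%N)
  (hs : forall i j : 'I_n.+1, (i <= j)%N -> (a i <= a j)%N) (hn : (2 <= n)%N)
  (h : (a (inord n.-1) < 2 * a ord0)%N) y :
  DeltaB a y -> y \in Pts n.
Proof.
move=> hy.
have hT := DeltaB_ineq ha hn (j := ord_max) (M := a (inord n.-1)).
have hT' : sA a y <= (a (inord n.-1))%:Z.
  have : - ((a (inord n.-1))%:Z) <= - sA a y.
    rewrite -dotUz_max; apply: hT => // i im; apply: hs; rewrite inordK; last lia.
    have := ltn_ord i; have : (i : nat) != n by apply/eqP => e; move/eqP: im; apply; apply: val_inj.
    lia.
  by rewrite lerN2.
apply: (classify (c := fun k => (a (W k))%:Z) (K := (a ord_max)%:Z) (T := (a (inord n.-1))%:Z)).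
- by move=> k /=; rewrite ltz_nat.
- by rewrite ltz_nat.
- move=> k /=; have := hs ord0 (W k) isT; lia.
- exact: hT'.
- move=> k /=; rewrite -Asum_split -/(sA a y) -dotUz_W.
  apply: (DeltaB_ineq ha hn) => // i _; apply: hs; rewrite /=; have := ltn_ord i; lia.
Qed.

Lemma relint_disj n (a : 'I_n.+1 -> nat) (Ls : seq 'rV[int]_n) :
  (forall l, l \in Ls <-> isLambda a l) ->
  forall l1 l2 y, l1 \in Ls -> l2 \in Ls -> relintFacet a l1 y -> relintFacet a l2 y -> l1 = l2.
Proof.
move=> hL l1 l2 y h1 h2 [e1 r1] [e2 r2].
case: (eqVneq l2 l1) => // ne.
have := r1 _ (proj1 (hL l2) h2) ne; rewrite e2; lia.
Qed.

Unset Implicit Arguments.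
Set Strict Implicit.

Theorem proposition5p6 (n : nat) (a : 'I_n.+1 -> nat) :
  (4 <= n)%N ->
  (forall i, (0 < a i)%N) ->
  (forall i j : 'I_n.+1, (i <= j)%N -> (a i <= a j)%N) ->
  \big[gcdn/0%N]_(i < n.+1) a i = 1%N ->
  (* (a) *)
  (forall x, conv (fun z => nablaP a z /\ isLattice z) x <-> nablaFloor a x) ->
  (* (b) *)
  (exists i j : 'I_n.+1, i != j /\ dgcd a i = 1%N /\ dgcd a j = 1%N) ->
  let c1 := mY_is a 1 in
  let c2 := card_is (DeltaB a) n.+2 /\
            card_is (fun y : 'rV[int]_n => nablaV (intv y)) n.+2 in
  let c3 := forall x, conv (fun z => exists y, z = intv y /\ DeltaB a y) x <-> nablaV x in
  let c4 := (a (inord n.-1) %/ a ord0)%N = 1%N in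
  [/\ c1 <-> c2, c2 <-> c3 & c3 <-> c4].
Proof.
move=> hn4 ha hs _ _ _ c1 c2 c3 c4.
have hn : (2 <= n)%N by lia.
have hn1 : (0 < n)%N by lia.
pose k0 : 'I_n := Ordinal hn1.
have Wk0 : W k0 = ord0 by apply: val_inj.
have hsn : (a ord0 <= a (inord n.-1))%N by apply: hs.
case: (boolP ((a (inord n.-1) %/ a ord0)%N == 1%N)) => [/eqP h4 | h4].
  have hlt : (a (inord n.-1) < 2 * a ord0)%N.
    have := divn_eq (a (inord n.-1)) (a ord0); have := ltn_pmod (a (inord n.-1)) (ha ord0).
    rewrite h4; lia.
  have hB : forall y, DeltaB a y <-> y \in Pts n.
    by move=> y; split; [exact: DeltaB_Pts_c4 | exact: Pts_DeltaB].
  have H2 : c2.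
    split.
      exists (Pts n); split; first exact: (Pts_uniq hn1).
      by split; [move=> y; exact: iff_sym (hB y) | exact: Pts_size].
    exists (Pts n); split; first exact: (Pts_uniq hn1).
    by split; [move=> y; exact: iff_sym (nabla_Pts y) | exact: Pts_size].
  have H3 : c3.
    move=> x; split.
      move=> hc; apply: H_nabla; apply: (H_conv _ hc) => z [y [-> hy]].
      by apply: nabla_H; apply/nabla_Pts; exact/hB.
    move=> [m [p [w [hp rest]]]]; exists m, p, w; split => // i.
    by have [j ->] := hp i; exists (Vcol j); split => //; exact: DeltaB_V.
  have H1 : c1.
    exists n.+2, (undup [seq Lam a j | j <- enum 'I_n.+1]), (fun _ => 0%N).
    split; first exact: undup_uniq.
    split.
      move=> l; rewrite mem_undup; split.
        by move/mapP => [j _ ->]; exact: Lam_isLambda.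
      move/(isLambda_char ha hn) => [j ->]; apply: map_f; by rewrite mem_enum.
    split; first exact: H2.1.
    split.
      move=> l _; exists [::]; split => //; split => // y; split => // hr.
      exfalso; exact: (Pts_not_relint ha hn (proj1 (hB y) (relint_DeltaB hr)) hr).
    rewrite big1 //; lia.
  by split; split.
have h2a : (2 * a ord0 <= a (inord n.-1))%N.
  have q1 : (0 < a (inord n.-1) %/ a ord0)%N by rewrite divn_gt0.
  have := divn_eq (a (inord n.-1)) (a ord0); move: h4 q1.
  set q := (_ %/ _)%N; move=> h4 q1 e.
  have q2 : (2 <= q)%N by move: h4 q1; lia.
  nia.
have h2 : (2 * a (W k0) <= a (inord n.-1))%N by rewrite Wk0.
set y2 := 2%:Z *: Vcol (W k0).
have hy2 : DeltaB a y2 := y2_DeltaB ha hs hn h2.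
have y2n := y2_notin (ltnW hn) k0.
have ut : uniq (y2 :: Pts n) by rewrite cons_uniq y2n (Pts_uniq hn1).
have tB : forall y, y \in y2 :: Pts n -> DeltaB a y.
  by move=> y; rewrite inE => /orP [/eqP ->|/Pts_DeltaB].
have N2 : ~ c2.
  move=> [[s [us [ms zs]]] _].
  have := uniq_leq_size ut (fun y hy => proj2 (ms y) (tB y hy)).
  change (size (y2 :: Pts n)) with (size (Pts n)).+1; rewrite Pts_size zs; lia.
have N3 : ~ c3.
  move=> h3; have := proj1 (h3 (intv y2)) (conv1 (ex_intro _ y2 (conj erefl hy2))).
  move/nabla_H => [hs1 _]; move: hs1; rewrite /y2 intvZ sumvZ sumv_Vcol.
  have -> : (W k0 == ord_max) = false by apply/eqP => /(congr1 val) /=; lia.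
  rewrite mulr1 => h.
  have : (2%:Z <= 1 :> int) by rewrite -(ler_int rat) rmorph1.
  by [].
have N1 : ~ c1.
  move=> [L [Ls [S [uLs [mLs [cB [cS e]]]]]]].
  have cU := card_union uLs cS (relint_disj mLs).
  have hle := card_le cU cB (fun y '(ex_intro2 l _ hr) => relint_DeltaB hr) ut tB.
  have : (\sum_(l <- Ls) S l + size (y2 :: Pts n) <= L)%N.
    apply: hle => y; rewrite inE => /orP [/eqP -> | hp] [l _ hr].
      exact: (y2_not_relint ha hn hr).
    exact: (Pts_not_relint ha hn hp hr).
  change (size (y2 :: Pts n)) with (size (Pts n)).+1; rewrite Pts_size; lia.
by split; split => h; exfalso; [exact: N1|exact: N2|exact: N2|exact: N3|exact: N3|move: h4; rewrite h].
Qed.
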